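(* The maps $\mu^\bullet X$ do not satisfy the monad associativity law on the whole capacity functor: there exist a compactum $X$ and a capacity $\gimel\in M(M(MX))$ such that $$\mu^\bullet X\circ \mu^\bullet (MX)(\gimel)\neq \mu^\bullet X\circ M(\mu^\bullet X)(\gimel).$$ (In fact one can take $X=\{a,b\}$ to be the two-point discrete space; the two sides then differ on the closed set $\{a\}$.)
   Context: A compactum is a compact Hausdorff space; $I=[0,1]$; $\mathcal F(X)$ denotes the family of closed subsets of $X$. An (upper-semicontinuous) capacity on a compactum $X$ is a function $\nu:\mathcal F(X)\to I$ such that: (1) $\nu(X)=1$, $\nu(\emptyset)=0$; (2) if $F\subset G$ then $\nu(F)\le\nu(G)$; (3) if $\nu(F)<a$ then there is an open set $O\supset F$ with $\nu(B)<a$ for every closed $B\subset O$. For open $U\subset X$ one puts $\nu(U)=\sup\{\nu(K): K\text{ closed},\ K\subset U\}$. $MX$ is the set of all capacities on $X$, topologized by the subbase consisting of the sets $\{c\in MX: c(F)<a\}$ ($F$ closed, $a\in I$) and $\{c\in MX: c(U)>a\}$ ($U$ open, $a\in I$); with this topology $MX$ is a compactum. For a continuous map $f:X\to Y$ of compacta, $Mf:MX\to MY$ is $Mf(c)(F)=c(f^{-1}(F))$. For a closed $F\subset X$ and $t\in I$ put $F_t=\{c\in MX: c(F)\ge t\}$, a closed subset of $MX$. The map $\mu^\bullet X: M(MX)\to MX$ is defined by $\mu^\bullet X(\mathcal C)(F)=\max\{\mathcal C(F_t)\cdot t: t\in(0,1]\}$ for $\mathcal C\in M(MX)$ and closed $F\subset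 X$ (the maximum exists). *)

(* Defs.v *)
From Stdlib Require Import Reals List ClassicalEpsilon.
Open Scope R_scope.

Definition is_topology {T : Type} (P : (T -> Prop) -> Prop) : Prop :=
  P (fun _ => True) /\
  (forall U V, P U -> P V -> P (fun x => U x /\ V x)) /\
  (forall S : (T -> Prop) -> Prop,
      (forall U, S U -> P U) -> P (fun x => exists U, S U /\ U x)).

Record space := Space {
  pt :> Type;
  is_open : (pt -> Prop) -> Prop;
  is_open_topology : is_topology is_open
}.

Definition closed (X : space) (F : X -> Prop) : Prop :=
  is_open X (fun x => ~ F x).

Definition subset {T : Type} (A B : T -> Prop) : Prop := forall x, A x -> B x.

Definition compact (X : space) : Prop :=
  forall S : (X -> Prop) -> Prop,
    (forall U, S U -> is_open X U) ->
    (forall x : X, exists U, S U /\ U x) ->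
    exists l : list (X -> Prop),
      (forall U, In U l -> S U) /\ (forall x : X, exists U, In U l /\ U x).

Definition hausdorff (X : space) : Prop :=
  forall x y : X, x <> y ->
    exists U V, is_open X U /\ is_open X V /\ U x /\ V y /\
                (forall z, ~ (U z /\ V z)).

Definition compactum (X : space) : Prop := compact X /\ hausdorff X.

Definition generated_open {T : Type} (B : (T -> Prop) -> Prop) (U : T -> Prop) : Prop :=
  forall P : (T -> Prop) -> Prop, is_topology P -> (forall V, B V -> P V) -> P U.

Lemma generated_open_topology {T : Type} (B : (T -> Prop) -> Prop) :
  is_topology (generated_open B).
Proof.
  split; [|split].
  - intros P [H _] _; exact H.
  - intros U V HU HV P HP HB. destruct HP as [H1 [H2 H3]].
    apply H2; [apply HU | apply HV]; try split; auto.
  - intros S HS P HP HB. destruct HP as [H1 [H2 H3]].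
    apply H3. intros U HU. apply HS; [exact HU | split; auto | exact HB].
Qed.

(** Upper-semicontinuous capacity on [X], as a set function on all subsets,
    normalised to be 0 off closed sets (only its values on closed sets matter). *)
Definition is_capacity (X : space) (nu : (X -> Prop) -> R) : Prop :=
  nu (fun _ => True) = 1 /\
  nu (fun _ => False) = 0 /\
  (forall F, closed X F -> 0 <= nu F <= 1) /\
  (forall F G, closed X F -> closed X G -> subset F G -> nu F <= nu G) /\
  (forall F a, closed X F -> nu F < a ->
     exists O, is_open X O /\ subset F O /\
       forall B, closed X B -> subset B O -> nu B < a) /\
  (forall F, ~ closed X F -> nu F = 0).

Definition cap (X : space) : Type := {nu : (X -> Prop) -> R | is_capacity X nu}.

Definition capval {X : space} (c : cap X) : (X -> Prop) -> R := proj1_sig c.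

(** [cap_open_gt nu U a] means [nu(U) > a], where
    [nu(U) = sup {nu(K) : K closed, K ⊂ U}]. *)
Definition cap_open_gt (X : space) (nu : (X -> Prop) -> R) (U : X -> Prop) (a : R) : Prop :=
  exists K, closed X K /\ subset K U /\ a < nu K.

Definition M_subbase (X : space) (V : cap X -> Prop) : Prop :=
  (exists F a, closed X F /\ 0 <= a <= 1 /\ V = (fun c => capval c F < a)) \/
  (exists U a, is_open X U /\ 0 <= a <= 1 /\ V = (fun c => cap_open_gt X (capval c) U a)).

Definition M (X : space) : space :=
  Space (cap X) (generated_open (M_subbase X)) (generated_open_topology (M_subbase X)).

Definition level_set (X : space) (F : X -> Prop) (t : R) : M X -> Prop :=
  fun c => capval c F >= t.

Definition is_max_level (X : space) (C : (M X -> Prop) -> R) (F : X -> Prop) (m : R) : Prop :=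
  (exists t, 0 < t <= 1 /\ m = C (level_set X F t) * t) /\
  (forall t, 0 < t <= 1 -> C (level_set X F t) * t <= m).

Definition mu_bullet (X : space) (C : (M X -> Prop) -> R) : (X -> Prop) -> R :=
  fun F => epsilon (inhabits 0) (fun m => is_max_level X C F m).

(** Preimage of [F ⊂ MX] under the map [mu_bullet X : M(MX) -> MX]. *)
Definition mu_bullet_preimage (X : space) (F : M X -> Prop) : M (M X) -> Prop :=
  fun C => exists c : M X, F c /\
    forall G, closed X G -> capval c G = mu_bullet X (capval C) G.

Definition M_mu_bullet (X : space) (gimel : M (M (M X))) : (M X -> Prop) -> R :=
  fun F => capval gimel (mu_bullet_preimage X F).

(* Main.v *)
Require Import Defs.
From Stdlib Require Import Reals.
From Stdlib Require Import List Arith Lra Lia Rtopology ClassicalEpsilon FunctionalExtensionality PropExtensionality ProofIrrelevance Classical.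
Open Scope R_scope.

Definition dec (P : Prop) : {P} + {~P} := excluded_middle_informative P.

Lemma pred_ext {T} (A B : T -> Prop) : (forall x, A x <-> B x) -> A = B.
Proof. intros H; apply functional_extensionality; intros x; apply propositional_extensionality; auto. Qed.

Lemma open_full (Y : space) : is_open Y (fun _ => True).
Proof. destruct (is_open_topology Y) as [H _]; exact H. Qed.
Lemma open_inter (Y : space) U V : is_open Y U -> is_open Y V -> is_open Y (fun x => U x /\ V x).
Proof. destruct (is_open_topology Y) as [_ [H _]]; auto. Qed.
Lemma open_union (Y : space) (S : (Y -> Prop) -> Prop) :
  (forall U, S U -> is_open Y U) -> is_open Y (fun x => exists U, S U /\ U x).
Proof. destruct (is_open_topology Y) as [_ [_ H]]; auto. Qed.
Lemma open_empty (Y : space) : is_open Y (fun _ => False).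
Proof.
  replace (fun _ : Y => False) with (fun x : Y => exists U, (fun _ : Y -> Prop => False) U /\ U x).
  - apply open_union; tauto.
  - apply pred_ext; firstorder.
Qed.
Lemma open_local (Y : space) (U : Y -> Prop) :
  (forall x, U x -> exists V, is_open Y V /\ V x /\ subset V U) -> is_open Y U.
Proof.
  intros H. replace U with (fun x => exists V, (is_open Y V /\ subset V U) /\ V x).
  - apply open_union; tauto.
  - apply pred_ext; intros x; split.
    + intros [V [[_ HV] Vx]]; auto.
    + intros Ux; destruct (H x Ux) as [V [? [? ?]]]; exists V; auto.
Qed.
Lemma closed_full (Y : space) : closed Y (fun _ => True).
Proof. unfold closed. replace (fun x:Y => ~True) with (fun _:Y => False).
  apply open_empty. apply pred_ext; tauto. Qed.

Lemma open_finite (Y : space) (U : nat -> Y -> Prop) n :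
  (forall k, (k < n)%nat -> is_open Y (U k)) ->
  is_open Y (fun x => forall k, (k < n)%nat -> U k x).
Proof.
  induction n; intros H.
  - replace (fun x : Y => forall k, (k < 0)%nat -> U k x) with (fun _ : Y => True).
    apply open_full. apply pred_ext; intros x; split; auto; intros; lia.
  - replace (fun x : Y => forall k, (k < S n)%nat -> U k x)
      with (fun x => (forall k, (k < n)%nat -> U k x) /\ U n x).
    + apply open_inter; auto.
    + apply pred_ext; intros x; split.
      * intros [H1 H2] k Hk. destruct (Nat.eq_dec k n); [subst; auto | apply H1; lia].
      * intros H1; split; auto.
Qed.

Lemma cap_prop {Y : space} (c : cap Y) : is_capacity Y (capval c).
Proof. exact (proj2_sig c). Qed.
Lemma cap_bounds {Y : space} (c : cap Y) S : 0 <= capval c S <= 1.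
Proof.
  destruct (cap_prop c) as [_ [_ [Hb [_ [_ Hn]]]]].
  destruct (classic (closed Y S)); [auto | rewrite Hn; auto; lra].
Qed.
Lemma cap_mono {Y : space} (c : cap Y) F G :
  closed Y F -> closed Y G -> subset F G -> capval c F <= capval c G.
Proof. destruct (cap_prop c) as [_ [_ [_ [Hm _]]]]; auto. Qed.
Lemma cap_full {Y : space} (c : cap Y) : capval c (fun _ => True) = 1.
Proof. destruct (cap_prop c) as [H _]; auto. Qed.
Lemma cap_empty {Y : space} (c : cap Y) : capval c (fun _ => False) = 0.
Proof. destruct (cap_prop c) as [_ [H _]]; auto. Qed.
Lemma cap_nonclosed {Y : space} (c : cap Y) F : ~ closed Y F -> capval c F = 0.
Proof. destruct (cap_prop c) as [_ [_ [_ [_ [_ H]]]]]; auto. Qed.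
Lemma cap_eq {Y : space} (x y : cap Y) : capval x = capval y -> x = y.
Proof. destruct x, y; simpl; intros ->; f_equal; apply proof_irrelevance. Qed.

Definition pat (P1 P2 : Prop) (v1 v2 : R) : R :=
  if dec (P1 /\ P2) then 1 else if dec P1 then v1 else if dec P2 then v2 else 0.

Lemma pat_mono P1 P2 Q1 Q2 v1 v2 : 0 <= v1 <= 1 -> 0 <= v2 <= 1 ->
  (P1 -> Q1) -> (P2 -> Q2) -> pat P1 P2 v1 v2 <= pat Q1 Q2 v1 v2.
Proof. intros; unfold pat; repeat destruct dec; try lra; exfalso; tauto. Qed.
Lemma pat_bounds P1 P2 v1 v2 : 0 <= v1 <= 1 -> 0 <= v2 <= 1 -> 0 <= pat P1 P2 v1 v2 <= 1.
Proof. intros; unfold pat; repeat destruct dec; lra. Qed.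

Definition c2val (Y : space) (y1 y2 : Y) (v1 v2 : R) (F : Y -> Prop) : R :=
  if dec (closed Y F) then pat (F y1) (F y2) v1 v2 else 0.

Lemma open_or_neq (Y : space) (A : Prop) (y : Y) :
  (forall y, is_open Y (fun x => x <> y)) -> is_open Y (fun x => A \/ x <> y).
Proof.
  intros Hpt. destruct (classic A).
  - replace (fun x : Y => A \/ x <> y) with (fun _ : Y => True). apply open_full.
    apply pred_ext; tauto.
  - replace (fun x : Y => A \/ x <> y) with (fun x : Y => x <> y). apply Hpt.
    apply pred_ext; tauto.
Qed.

Lemma c2_is_cap (Y : space) y1 y2 v1 v2 : (forall y, is_open Y (fun x => x <> y)) ->
  0 <= v1 <= 1 -> 0 <= v2 <= 1 -> is_capacity Y (c2val Y y1 y2 v1 v2).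
Proof.
  intros Hpt H1 H2. unfold c2val. split; [|split; [|split; [|split; [|split]]]].
  - destruct dec as [_|n]; [|exfalso; apply n, closed_full].
    unfold pat; destruct dec; tauto.
  - destruct dec; auto. unfold pat; repeat destruct dec; tauto.
  - intros F HF; destruct dec; [apply pat_bounds; auto | tauto].
  - intros F G HF HG HFG. do 2 (destruct dec; [|tauto]). apply pat_mono; auto.
  - intros F a HF Ha. destruct dec as [_|]; [|tauto].
    exists (fun x => (F y1 \/ x <> y1) /\ (F y2 \/ x <> y2)). split; [|split].
    + apply open_inter; apply open_or_neq; auto.
    + intros x Fx; split.
      * destruct (classic (x = y1)) as [->|]; auto.
      * destruct (classic (x = y2)) as [->|]; auto.
    + intros B HB HBO. destruct dec as [_|]; [|tauto].
      eapply Rle_lt_trans; [|exact Ha]. apply pat_mono; auto.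
      * intros Hb; destruct (HBO y1 Hb) as [[|] _]; tauto.
      * intros Hb; destruct (HBO y2 Hb) as [_ [|]]; tauto.
  - intros F HF; destruct dec; tauto.
Qed.

Definition cap2 (Y : space) (y1 y2 : Y) v1 v2 Hpt H1 H2 : cap Y :=
  exist _ (c2val Y y1 y2 v1 v2) (c2_is_cap Y y1 y2 v1 v2 Hpt H1 H2).

Lemma cap2_val Y y1 y2 v1 v2 Hpt H1 H2 F :
  capval (cap2 Y y1 y2 v1 v2 Hpt H1 H2) F = c2val Y y1 y2 v1 v2 F.
Proof. reflexivity. Qed.

Lemma subbase_open (Y : space) V : M_subbase Y V -> is_open (M Y) V.
Proof. intros H; cbn; intros P HP HB; apply HB; auto. Qed.

Lemma M_points (Y : space) : forall y : M Y, is_open (M Y) (fun x => x <> y).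
Proof.
  intros y; apply open_local; intros x Hxy.
  assert (HG : exists G, capval x G <> capval y G).
  { apply not_all_ex_not; intros H; apply Hxy; apply cap_eq;
      apply functional_extensionality; exact H. }
  destruct HG as [G HG].
  assert (HGc : closed Y G).
  { destruct (classic (closed Y G)); auto. rewrite !cap_nonclosed in HG; tauto. }
  destruct (Rlt_or_le (capval x G) (capval y G)).
  - exists (fun c : cap Y => capval c G < capval y G). split; [|split].
    + apply subbase_open; left; exists G, (capval y G); split; [auto|split; [apply cap_bounds|reflexivity]].
    + auto.
    + intros c Hc Hcy; subst; lra.
  - assert (Hlt : capval y G < (capval x G + capval y G)/2) by lra.
    destruct (cap_prop y) as [_ [_ [_ [_ [Husc _]]]]].
    destruct (Husc G _ HGc Hlt) as [O [HO [HGO HB]]].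
    exists (fun c : cap Y => cap_open_gt Y (capval c) O ((capval x G + capval y G)/2)).
    split; [|split].
    + apply subbase_open; right; exists O, ((capval x G + capval y G)/2).
      pose proof (cap_bounds x G); pose proof (cap_bounds y G).
      split; [auto|split; [lra|reflexivity]].
    + exists G; split; [auto|split; [auto|lra]].
    + intros c [K [HK [HKO Ha]]] Hcy; subst. specialize (HB K HK HKO); lra.
Qed.

Lemma level_closed (Y : space) F t : closed Y F -> 0 <= t <= 1 -> closed (M Y) (level_set Y F t).
Proof.
  intros HF Ht. unfold closed at 1.
  replace (fun x : M Y => ~ level_set Y F t x) with (fun c : cap Y => capval c F < t).
  - apply subbase_open; left; exists F, t; auto.
  - apply pred_ext; intros c; unfold level_set; split; intros; lra.
Qed.

Lemma open_lt (Y : space) L a : closed Y L -> 0 <= a -> is_open (M Y) (fun C : cap Y => capval C L < a).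
Proof.
  intros HL Ha. destruct (Rle_lt_dec a 1).
  - apply subbase_open; left; exists L, a; auto.
  - replace (fun C : cap Y => capval C L < a) with (fun _ : cap Y => True).
    apply open_full. apply pred_ext; intros C; pose proof (cap_bounds C L); split; intros; lra.
Qed.

Lemma mb_eq (Y : space) C F m : is_max_level Y C F m -> mu_bullet Y C F = m.
Proof.
  intros H. unfold mu_bullet.
  pose proof (epsilon_spec (inhabits 0) (fun m => is_max_level Y C F m) (ex_intro _ m H)) as H0.
  set (m' := epsilon _ _) in *. cbv beta in H0.
  destruct H as [[t [Ht Et]] Hle]; destruct H0 as [[t' [Ht' Et']] Hle'].
  specialize (Hle t' Ht'); specialize (Hle' t Ht). lra.
Qed.

Lemma Xb_top : is_topology (fun _ : bool -> Prop => True).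
Proof. split; [|split]; auto. Qed.
Definition Xb : space := Space bool (fun _ => True) Xb_top.

Lemma Xb_closed (F : Xb -> Prop) : closed Xb F.
Proof. exact I. Qed.
Lemma Xb_pts : forall y : Xb, is_open Xb (fun x => x <> y).
Proof. intros; exact I. Qed.

Lemma Xb_compactum : compactum Xb.
Proof.
  split.
  - intros S HS Hcov. destruct (Hcov true) as [U1 [HU1 U1t]]. destruct (Hcov false) as [U2 [HU2 U2f]].
    exists (U1 :: U2 :: nil). split.
    + intros U [<-|[<-|[]]]; auto.
    + intros [|]; [exists U1 | exists U2]; simpl; auto.
  - intros x y Hxy. exists (fun z => z = x), (fun z => z = y).
    split; [exact I|split; [exact I|split; [auto|split; [auto|]]]].
    intros z [-> ->]; auto.
Qed.

Definition coord (b : bool) (c : cap Xb) : R := capval c (fun x => x = b).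

Lemma formula (c : cap Xb) G :
  capval c G = pat (G true) (G false) (coord true c) (coord false c).
Proof.
  unfold pat, coord; repeat destruct dec.
  - replace G with (fun _ : Xb => True). apply cap_full.
    apply pred_ext; intros [|]; tauto.
  - f_equal. apply pred_ext; intros [|]; split; intros; try tauto; try discriminate; auto.
  - f_equal. apply pred_ext; intros [|]; split; intros; try tauto; try discriminate; auto.
  - replace G with (fun _ : Xb => False). apply cap_empty.
    apply pred_ext; intros [|]; tauto.
Qed.

Definition mkB p q (Hp : 0 <= p <= 1) (Hq : 0 <= q <= 1) : cap Xb :=
  cap2 Xb true false p q Xb_pts Hp Hq.

Lemma mkB_t p q Hp Hq : coord true (mkB p q Hp Hq) = p.
Proof. unfold coord, mkB; rewrite cap2_val; unfold c2val.
  destruct dec as [_|Hn]; [|exfalso; apply Hn; exact I].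
  unfold pat; repeat destruct dec; auto; exfalso; intuition discriminate. Qed.
Lemma mkB_f p q Hp Hq : coord false (mkB p q Hp Hq) = q.
Proof. unfold coord, mkB; rewrite cap2_val; unfold c2val.
  destruct dec as [_|Hn]; [|exfalso; apply Hn; exact I].
  unfold pat; repeat destruct dec; auto; exfalso; intuition discriminate. Qed.

Definition mopen (U : cap Xb -> Prop) : Prop :=
  forall c, U c -> exists e, 0 < e /\ forall c',
    Rabs (coord true c' - coord true c) < e -> Rabs (coord false c' - coord false c) < e -> U c'.

Lemma lip c c' G e : 0 < e -> Rabs (coord true c' - coord true c) < e ->
  Rabs (coord false c' - coord false c) < e -> Rabs (capval c' G - capval c G) < e.
Proof.
  intros He H1 H2. rewrite !formula. unfold pat; repeat destruct dec; auto;
  rewrite Rminus_diag, Rabs_R0; auto.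
Qed.

Lemma mopen_top : is_topology mopen.
Proof.
  split; [|split].
  - intros c _; exists 1; split; auto; lra.
  - intros U V HU HV c [Uc Vc]. destruct (HU c Uc) as [e1 [He1 H1]]. destruct (HV c Vc) as [e2 [He2 H2]].
    exists (Rmin e1 e2); split. apply Rmin_pos; auto.
    intros c' A B. pose proof (Rmin_l e1 e2); pose proof (Rmin_r e1 e2). split.
    + apply H1; lra.
    + apply H2; lra.
  - intros S HS c [U [SU Uc]]. destruct (HS U SU c Uc) as [e [He H]].
    exists e; split; auto. intros c' A B; exists U; split; auto.
Qed.

Lemma gen_mopen U : is_open (M Xb) U -> mopen U.
Proof.
  intros H. apply H; [apply mopen_top|].
  intros V [[F [a [HF [Ha ->]]]] | [W [a [HW [Ha ->]]]]].
  - intros c Hc. exists (a - capval c F); split; [lra|].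
    intros c' A B. assert (Rabs (capval c' F - capval c F) < a - capval c F) by (apply lip; auto; lra).
    apply Rabs_def2 in H0; lra.
  - intros c [K [HK [HKW Hk]]]. exists (capval c K - a); split; [lra|].
    intros c' A B. assert (Rabs (capval c' K - capval c K) < capval c K - a) by (apply lip; auto; lra).
    apply Rabs_def2 in H0. exists K; split; auto; split; auto; lra.
Qed.

Lemma small_inv e : 0 < e -> exists N, forall p, (N <= p)%nat -> / (INR p + 1) < e.
Proof.
  intros He. destruct (INR_archimed e 1 He) as [N HN]. exists N. intros p Hp.
  apply le_INR in Hp. pose proof (pos_INR p).
  apply (Rmult_lt_reg_l (INR p + 1)); [lra|]. rewrite Rinv_r; [nra|lra].
Qed.

Lemma inv_le N p : (N <= p)%nat -> / (INR p + 1) <= / (INR N + 1).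
Proof.
  intros H; apply le_INR in H; pose proof (pos_INR N). apply Rinv_le_contravar; lra.
Qed.

Lemma adh_in (u : nat -> R) l : (forall n, 0 <= u n <= 1) -> ValAdh u l -> 0 <= l <= 1.
Proof.
  intros Hu Hl. split; apply Rnot_lt_le; intros Hc.
  - assert (Hd : 0 < - l) by lra.
    destruct (Hl (disc l (mkposreal _ Hd)) 0%nat) as [p [_ Hp]].
    { exists (mkposreal _ Hd); intros y Hy; exact Hy. }
    unfold disc in Hp; simpl in Hp. apply Rabs_def2 in Hp. specialize (Hu p); lra.
  - assert (Hd : 0 < l - 1) by lra.
    destruct (Hl (disc l (mkposreal _ Hd)) 0%nat) as [p [_ Hp]].
    { exists (mkposreal _ Hd); intros y Hy; exact Hy. }
    unfold disc in Hp; simpl in Hp. apply Rabs_def2 in Hp. specialize (Hu p); lra.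
Qed.

Lemma tube b (O : cap Xb -> Prop) s : is_open (M Xb) O -> 0 < s <= 1 ->
  (forall c, coord b c >= s -> O c) ->
  exists r, 0 < r < s /\ forall c, coord b c >= r -> O c.
Proof.
  intros HO Hs H. apply NNPP; intro Hn.
  assert (Hseq : forall n : nat, exists c, coord b c >= s - s/2 * / (INR n + 1) /\ ~ O c).
  { intros n. apply NNPP; intro H2. apply Hn.
    pose proof (pos_INR n).
    assert (0 < / (INR n + 1) <= 1).
    { split. apply Rinv_0_lt_compat; lra. rewrite <- Rinv_1; apply Rinv_le_contravar; lra. }
    exists (s - s/2 * / (INR n + 1)). split. split; nra.
    intros c Hc. apply NNPP; intro; apply H2; exists c; auto. }
  set (cs := fun n => proj1_sig (constructive_indefinite_description _ (Hseq n))).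
  assert (Hcs : forall n, coord b (cs n) >= s - s/2 * / (INR n + 1) /\ ~ O (cs n)).
  { intros n; unfold cs; destruct constructive_indefinite_description; auto. }
  set (qn := fun n => coord (negb b) (cs n)).
  assert (Hq : forall n, 0 <= qn n <= 1) by (intros; apply cap_bounds).
  destruct (Bolzano_Weierstrass qn (fun c => 0 <= c <= 1) (compact_P3 0 1) Hq) as [l Hl].
  pose proof (adh_in qn l Hq Hl) as Hl01.
  assert (Hs01 : 0 <= s <= 1) by lra.
  set (d := if b then mkB s l Hs01 Hl01 else mkB l s Hl01 Hs01).
  assert (Hdb : coord b d = s) by (unfold d; destruct b; [apply mkB_t | apply mkB_f]).
  assert (Hdnb : coord (negb b) d = l) by (unfold d; destruct b; [apply mkB_f | apply mkB_t]).
  assert (Od : O d) by (apply H; lra).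
  destruct (gen_mopen O HO d Od) as [e [He He']].
  destruct (small_inv e He) as [N HN].
  destruct (Hl (disc l (mkposreal e He)) N) as [p [Hp Hpd]].
  { exists (mkposreal e He); intros y Hy; exact Hy. }
  unfold disc in Hpd; simpl in Hpd.
  destruct (Hcs p) as [Hcp HnO].
  assert (Hlt : coord b (cs p) < s).
  { apply Rnot_le_lt; intro; apply HnO, H; lra. }
  assert (Hb : Rabs (coord b (cs p) - coord b d) < e).
  { rewrite Hdb. specialize (HN p Hp). pose proof (pos_INR p).
    assert (0 < / (INR p + 1)) by (apply Rinv_0_lt_compat; lra).
    rewrite Rabs_left; nra. }
  assert (Hnb : Rabs (coord (negb b) (cs p) - coord (negb b) d) < e) by (rewrite Hdnb; exact Hpd).
  clearbody d. apply HnO. destruct b; simpl in Hnb; apply He'; auto.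
Qed.

Lemma ev (phi : R -> R) :
  (forall t, 0 < t <= 1 -> 0 <= phi t <= 1) ->
  (forall t t', 0 < t <= t' -> t' <= 1 -> phi t' <= phi t) ->
  (forall t a, 0 < t <= 1 -> phi t < a -> exists r, 0 < r < t /\ phi r < a) ->
  exists t, 0 < t <= 1 /\ forall s, 0 < s <= 1 -> phi s * s <= phi t * t.
Proof.
  intros Hb Hm Hc.
  set (E := fun v => exists s, 0 < s <= 1 /\ v = phi s * s).
  assert (HE1 : bound E).
  { exists 1; intros v [s [Hs ->]]; specialize (Hb s Hs); nra. }
  assert (HE2 : exists v, E v) by (exists (phi 1 * 1), 1; split; [lra|auto]).
  destruct (completeness E HE1 HE2) as [sig [Hub Hlub]].
  assert (Hup : forall s, 0 < s <= 1 -> phi s * s <= sig).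
  { intros s Hs; apply Hub; exists s; auto. }
  destruct (Rle_lt_dec sig (phi 1 * 1)) as [Hle|Hlt].
  { exists 1; split; [lra|]. intros s Hs; specialize (Hup s Hs); lra. }
  assert (H1 : 0 <= phi 1) by (apply Hb; lra).
  assert (Hseq : forall n : nat, exists s, 0 < s <= 1 /\ phi s * s > sig - / (INR n + 1)).
  { intros n. pose proof (pos_INR n).
    assert (0 < / (INR n + 1)) by (apply Rinv_0_lt_compat; lra).
    apply NNPP; intro Hn.
    assert (sig <= sig - / (INR n + 1)); [|lra].
    apply Hlub. intros v [s [Hs ->]]. apply Rnot_lt_le; intro; apply Hn; exists s; split; auto. }
  set (sn := fun n => proj1_sig (constructive_indefinite_description _ (Hseq n))).
  assert (Hsn : forall n, 0 < sn n <= 1 /\ phi (sn n) * sn n > sig - / (INR n + 1)).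
  { intros n; unfold sn; destruct constructive_indefinite_description; auto. }
  assert (Hsn01 : forall n, 0 <= sn n <= 1) by (intros n; destruct (Hsn n); lra).
  destruct (Bolzano_Weierstrass sn (fun c => 0 <= c <= 1) (compact_P3 0 1) Hsn01) as [l Hl].
  pose proof (adh_in sn l Hsn01 Hl) as Hl01.
  assert (Hlsig : sig <= l).
  { apply Rnot_lt_le; intro Hc0.
    assert (Hd : 0 < (sig - l)/2) by lra.
    destruct (small_inv _ Hd) as [N HN].
    destruct (Hl (disc l (mkposreal _ Hd)) N) as [p [Hp Hpd]].
    { exists (mkposreal _ Hd); intros y Hy; exact Hy. }
    unfold disc in Hpd; simpl in Hpd. apply Rabs_def2 in Hpd.
    destruct (Hsn p) as [Hp1 Hp2]. specialize (HN p Hp). specialize (Hb _ Hp1). nra. }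
  assert (Hl0 : 0 < l) by lra.
  exists l; split; [lra|].
  intros s Hs. eapply Rle_trans; [apply Hup; auto|].
  apply Rnot_lt_le; intro Hc0.
  assert (Hpl : 0 <= phi l <= 1) by (apply Hb; lra).
  assert (Hphil : phi l < sig / l).
  { apply (Rmult_lt_reg_r l); [lra|]. unfold Rdiv; rewrite Rmult_assoc, Rinv_l; lra. }
  set (a := (phi l + sig / l) / 2).
  assert (Ha1 : phi l < a) by (unfold a; lra).
  assert (Ha2 : l * a < sig).
  { assert (a < sig / l) by (unfold a; lra).
    apply (Rmult_lt_compat_l l) in H; [|lra]. unfold Rdiv in H.
    rewrite <- Rmult_assoc, (Rmult_comm l sig), Rmult_assoc, Rinv_r in H; lra. }
  assert (Ha0 : 0 < a) by lra.
  destruct (Hc l a ltac:(lra) Ha1) as [r [Hr Hra]].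
  set (dl := (sig - l * a) / (2 * a)).
  assert (Hdl : 0 < dl) by (unfold dl; apply Rdiv_lt_0_compat; lra).
  assert (Hdla : dl * a = (sig - l * a) / 2).
  { unfold dl; field; lra. }
  set (eta := sig - (l + dl) * a).
  assert (Heta : 0 < eta) by (unfold eta; nra).
  assert (Hrho : 0 < Rmin (l - r) dl) by (apply Rmin_pos; lra).
  destruct (small_inv _ Heta) as [N HN].
  destruct (Hl (disc l (mkposreal _ Hrho)) N) as [p [Hp Hpd]].
  { exists (mkposreal _ Hrho); intros y Hy; exact Hy. }
  unfold disc in Hpd; simpl in Hpd. apply Rabs_def2 in Hpd.
  pose proof (Rmin_l (l - r) dl); pose proof (Rmin_r (l - r) dl).
  destruct (Hsn p) as [Hp1 Hp2]. specialize (HN p Hp).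
  assert (Hsp : phi (sn p) * sn p <= (l + dl) * a).
  { destruct (Rle_lt_dec (sn p) l).
    - assert (phi (sn p) <= phi r) by (apply Hm; lra).
      assert (phi (sn p) < a) by lra.
      assert (0 <= phi (sn p)) by (apply Hb; auto). nra.
    - assert (phi (sn p) <= phi l) by (apply Hm; lra).
      assert (0 <= phi (sn p)) by (apply Hb; auto). nra. }
  unfold eta in HN. lra.
Qed.

Lemma lev_closed (G : Xb -> Prop) t : 0 <= t <= 1 -> closed (M Xb) (level_set Xb G t).
Proof. intros; apply level_closed; auto; apply Xb_closed. Qed.

Lemma phi_mono (C : cap (M Xb)) G t t' : 0 < t <= t' -> t' <= 1 ->
  capval C (level_set Xb G t') <= capval C (level_set Xb G t).
Proof.
  intros. apply cap_mono; try apply lev_closed; try lra.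
  intros c Hc; unfold level_set in *; lra.
Qed.

Lemma phi_lc (C : cap (M Xb)) b t a : 0 < t <= 1 ->
  capval C (level_set Xb (fun x => x = b) t) < a ->
  exists r, 0 < r < t /\ capval C (level_set Xb (fun x => x = b) r) < a.
Proof.
  intros Ht Ha. destruct (cap_prop C) as [_ [_ [_ [_ [Husc _]]]]].
  destruct (Husc _ a (lev_closed _ t ltac:(lra)) Ha) as [O [HO [HGO HB]]].
  destruct (tube b O t HO Ht) as [r [Hr Hr']].
  { intros c Hc; apply HGO; exact Hc. }
  exists r; split; auto. apply HB. apply lev_closed; lra.
  intros c Hc; apply Hr'; exact Hc.
Qed.

Lemma max_exists (C : cap (M Xb)) b : exists m, is_max_level Xb (capval C) (fun x => x = b) m.
Proof.
  destruct (ev (fun t => capval C (level_set Xb (fun x => x = b) t))) as [t [Ht Hmax]].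
  - intros; apply cap_bounds.
  - intros; apply phi_mono; auto.
  - intros; apply phi_lc; auto.
  - exists (capval C (level_set Xb (fun x => x = b) t) * t). split; auto.
    exists t; split; auto.
Qed.

Lemma max_bounds (Y : space) (C : cap (M Y)) F m : is_max_level Y (capval C) F m -> 0 <= m <= 1.
Proof.
  intros [[t [Ht ->]] _]. pose proof (cap_bounds C (level_set Y F t)). nra.
Qed.

Definition muv (C : cap (M Xb)) b := mu_bullet Xb (capval C) (fun x => x = b).

Lemma muv_bounds C b : 0 <= muv C b <= 1.
Proof.
  destruct (max_exists C b) as [m Hm]. unfold muv; rewrite (mb_eq _ _ _ _ Hm).
  eapply max_bounds; eauto.
Qed.

Definition cC (C : cap (M Xb)) : cap Xb := mkB (muv C true) (muv C false) (muv_bounds C true) (muv_bounds C false).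

Lemma mb_full (C : cap (M Xb)) : mu_bullet Xb (capval C) (fun _ => True) = 1.
Proof.
  apply mb_eq. assert (Hl : forall t, 0 < t <= 1 -> level_set Xb (fun _ => True) t = (fun _ => True)).
  { intros t Ht; apply pred_ext; intros c; unfold level_set; rewrite cap_full; split; auto; lra. }
  split.
  - exists 1; split; [lra|]. rewrite Hl by lra. rewrite cap_full; lra.
  - intros t Ht. rewrite Hl by auto. rewrite cap_full; lra.
Qed.

Lemma mb_empty (C : cap (M Xb)) : mu_bullet Xb (capval C) (fun _ => False) = 0.
Proof.
  apply mb_eq. assert (Hl : forall t, 0 < t <= 1 -> level_set Xb (fun _ => False) t = (fun _ => False)).
  { intros t Ht; apply pred_ext; intros c; unfold level_set; rewrite cap_empty; split; try tauto; lra. }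
  split.
  - exists 1; split; [lra|]. rewrite Hl by lra. rewrite cap_empty; lra.
  - intros t Ht. rewrite Hl by auto. rewrite cap_empty; lra.
Qed.

Lemma agree (C : cap (M Xb)) G : capval (cC C) G = mu_bullet Xb (capval C) G.
Proof.
  rewrite formula. unfold cC; rewrite mkB_t, mkB_f.
  unfold pat; repeat destruct dec.
  - replace G with (fun _ : Xb => True). symmetry; apply mb_full.
    apply pred_ext; intros [|]; tauto.
  - unfold muv; f_equal. apply pred_ext; intros [|]; split; intros; try tauto; try discriminate; auto.
  - unfold muv; f_equal. apply pred_ext; intros [|]; split; intros; try tauto; try discriminate; auto.
  - replace G with (fun _ : Xb => False). symmetry; apply mb_empty.
    apply pred_ext; intros [|]; tauto.
Qed.

Notation Gt := (fun x : Xb => x = true).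

Lemma r_half : 0 <= 1/2 <= 1. Proof. lra. Qed.
Lemma r_zero : 0 <= 0 <= 1. Proof. lra. Qed.
Lemma r_one : 0 <= 1 <= 1. Proof. lra. Qed.

Definition c_half := mkB (1/2) 0 r_half r_zero.
Definition c_one := mkB 1 0 r_one r_zero.
Definition c_zero := mkB 0 0 r_zero r_zero.
Definition C1 : cap (M Xb) := cap2 (M Xb) c_half c_half 1 1 (M_points Xb) r_one r_one.
Definition C2 : cap (M Xb) := cap2 (M Xb) c_one c_zero (1/2) 0 (M_points Xb) r_half r_zero.
Definition gim : cap (M (M Xb)) := cap2 (M (M Xb)) C1 C2 0 0 (M_points (M Xb)) r_zero r_zero.

Lemma ch : capval c_half Gt = 1/2. Proof. exact (mkB_t _ _ r_half r_zero). Qed.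
Lemma co : capval c_one Gt = 1. Proof. exact (mkB_t _ _ r_one r_zero). Qed.
Lemma cz : capval c_zero Gt = 0. Proof. exact (mkB_t _ _ r_zero r_zero). Qed.

Lemma C1_le t : 0 < t <= 1/2 -> capval C1 (level_set Xb Gt t) = 1.
Proof.
  intros Ht. unfold C1; rewrite cap2_val; unfold c2val.
  destruct dec as [_|Hn]; [|exfalso; apply Hn, lev_closed; lra].
  unfold pat, level_set; rewrite ch. repeat destruct dec; try lra; exfalso; tauto.
Qed.
Lemma C1_gt t : 1/2 < t <= 1 -> capval C1 (level_set Xb Gt t) = 0.
Proof.
  intros Ht. unfold C1; rewrite cap2_val; unfold c2val.
  destruct dec as [_|Hn]; [|exfalso; apply Hn, lev_closed; lra].
  unfold pat, level_set; rewrite ch. repeat destruct dec; try lra; exfalso; tauto.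
Qed.
Lemma C2_val t : 0 < t <= 1 -> capval C2 (level_set Xb Gt t) = 1/2.
Proof.
  intros Ht. unfold C2; rewrite cap2_val; unfold c2val.
  destruct dec as [_|Hn]; [|exfalso; apply Hn, lev_closed; lra].
  unfold pat, level_set; rewrite co, cz. repeat destruct dec; try lra; exfalso; tauto.
Qed.

Lemma muv_C1 : muv C1 true = 1/2.
Proof.
  apply mb_eq. split.
  - exists (1/2); split; [lra|]. rewrite C1_le by lra. lra.
  - intros t Ht. destruct (Rle_lt_dec t (1/2)).
    + rewrite C1_le by lra; lra.
    + rewrite C1_gt by lra; lra.
Qed.
Lemma muv_C2 : muv C2 true = 1/2.
Proof.
  apply mb_eq. split.
  - exists 1; split; [lra|]. rewrite C2_val by lra. lra.
  - intros t Ht. rewrite C2_val by lra; lra.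
Qed.

Lemma pre_iff (C : cap (M Xb)) t : muv C true = 1/2 ->
  (mu_bullet_preimage Xb (level_set Xb Gt t) C <-> t <= 1/2).
Proof.
  intros Hm; split.
  - intros [c [Hc Hag]]. unfold level_set in Hc. rewrite (Hag Gt (Xb_closed _)) in Hc.
    unfold muv in Hm. lra.
  - intros Ht. exists (cC C); split.
    + unfold level_set. change (coord true (cC C) >= t). unfold cC; rewrite mkB_t; lra.
    + intros G _; apply agree.
Qed.

Lemma pre_closed : closed (M (M Xb)) (mu_bullet_preimage Xb (level_set Xb Gt (1/2))).
Proof.
  unfold closed. apply open_local. intros C0 H0.
  destruct (max_exists C0 true) as [m0 Hm0].
  assert (Hm0b := max_bounds _ _ _ _ Hm0).
  assert (Hm0l : m0 < 1/2).
  { apply Rnot_le_lt; intro; apply H0. exists (cC C0). split.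
    - unfold level_set. change (coord true (cC C0) >= 1/2). unfold cC; rewrite mkB_t.
      unfold muv; rewrite (mb_eq _ _ _ _ Hm0); lra.
    - intros G _; apply agree. }
  destruct (INR_archimed (1/2 - m0) m0 ltac:(lra)) as [K0 HK0].
  set (K := S K0).
  assert (HK : INR K * (1/2 - m0) > m0).
  { unfold K; rewrite S_INR; nra. }
  assert (HK1 : 1 <= INR K) by (unfold K; rewrite S_INR; pose proof (pos_INR K0); lra).
  set (N := (2 * K + 1)%nat).
  assert (HN : INR N = 2 * INR K + 1) by (unfold N; rewrite plus_INR, mult_INR; simpl; lra).
  set (cond := fun (k : nat) (C : cap (M Xb)) =>
     capval C (level_set Xb Gt (INR k / INR N)) < INR N / (2 * (INR k + 1))).
  exists (fun C => forall k, (k < N)%nat -> ((K <= k)%nat -> cond k C)).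
  split; [|split].
  - apply open_finite. intros k Hk. destruct (le_lt_dec K k) as [Hkk|Hkk].
    + replace (fun C : M (M Xb) => (K <= k)%nat -> cond k C) with (cond k).
      * unfold cond. apply open_lt.
        { apply lev_closed. apply lt_INR in Hk. pose proof (pos_INR k). split.
          - apply Rmult_le_pos; [lra| left; apply Rinv_0_lt_compat; lra].
          - apply Rmult_le_reg_r with (INR N); [lra|]. unfold Rdiv; rewrite Rmult_assoc, Rinv_l; lra. }
        { pose proof (pos_INR k). apply Rlt_le, Rdiv_lt_0_compat; lra. }
      * apply pred_ext; intros C; split; auto.
    + replace (fun C : M (M Xb) => (K <= k)%nat -> cond k C) with (fun _ : M (M Xb) => True).
      * apply open_full.
      * apply pred_ext; intros C; split; auto; intros; lia.
  - intros k Hk HKk. unfold cond.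
    apply lt_INR in Hk. apply le_INR in HKk.
    set (t := INR k / INR N).
    assert (Ht : 0 < t <= 1).
    { unfold t; split. apply Rdiv_lt_0_compat; lra.
      apply Rmult_le_reg_r with (INR N); [lra|]. unfold Rdiv; rewrite Rmult_assoc, Rinv_l; lra. }
    destruct Hm0 as [_ Hle]. specialize (Hle t Ht).
    set (ph := capval C0 (level_set Xb Gt t)) in *.
    assert (Hph : 0 <= ph) by apply cap_bounds.
    assert (E1 : ph * INR k <= m0 * INR N).
    { unfold t in Hle. replace (ph * INR k) with (ph * (INR k / INR N) * INR N).
      apply Rmult_le_compat_r; lra. field; lra. }
    assert (E2 : 2 * m0 * (INR k + 1) < INR k) by nra.
    assert (E3 : ph * (2 * (INR k + 1)) < INR N).
    { assert (ph * INR k * (2 * (INR k + 1)) <= m0 * INR N * (2 * (INR k + 1))) by (apply Rmult_le_compat_r; lra).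
      assert (m0 * INR N * (2 * (INR k + 1)) < INR N * INR k) by nra.
      nra. }
    apply Rmult_lt_reg_r with (2 * (INR k + 1)); [lra|].
    unfold Rdiv; rewrite Rmult_assoc, Rinv_l; lra.
  - intros C HC [c [Hc Hag]].
    destruct (max_exists C true) as [mC HmC].
    unfold level_set in Hc. rewrite (Hag Gt (Xb_closed _)), (mb_eq _ _ _ _ HmC) in Hc.
    assert (Hall : forall j, (j <= N)%nat -> forall s, 0 < s <= INR j / INR N ->
               capval C (level_set Xb Gt s) * s < 1/2).
    { induction j as [|j IH]; intros Hj s Hs.
      - simpl in Hs. unfold Rdiv in Hs; rewrite Rmult_0_l in Hs; lra.
      - pose proof (cap_bounds C (level_set Xb Gt s)) as Hb.
        rewrite S_INR in Hs. apply le_INR in Hj. rewrite S_INR in Hj.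
        destruct (le_lt_dec (S j) K) as [HjK|HjK].
        + apply le_INR in HjK; rewrite S_INR in HjK.
          assert (s < 1/2).
          { assert (s <= INR K / INR N).
            { eapply Rle_trans; [apply Hs|]. unfold Rdiv; apply Rmult_le_compat_r; [|lra].
              left; apply Rinv_0_lt_compat; lra. }
            assert (INR K / INR N < 1/2); [|lra].
            apply Rmult_lt_reg_r with (INR N); [lra|]. unfold Rdiv; rewrite Rmult_assoc, Rinv_l; lra. }
          nra.
        + destruct (Rle_lt_dec s (INR j / INR N)) as [Hs'|Hs'].
          * apply IH; [apply INR_le; lra | lra].
          * assert (HjN : (j < N)%nat) by (apply INR_lt; lra).
            assert (HKj : (K <= j)%nat) by lia.
            specialize (HC j HjN HKj). unfold cond in HC.
            apply le_INR in HKj.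
            assert (Hj0 : 0 < INR j / INR N) by (apply Rdiv_lt_0_compat; lra).
            assert (Hs2 : s * INR N <= INR j + 1).
            { destruct Hs as [_ Hs]. apply Rmult_le_compat_r with (r := INR N) in Hs; [|lra].
              unfold Rdiv in Hs; rewrite Rmult_assoc, Rinv_l in Hs; lra. }
            assert (Hs1 : s <= 1) by nra.
            assert (Hmono : capval C (level_set Xb Gt s) <= capval C (level_set Xb Gt (INR j / INR N))).
            { assert (Hj1 : INR j / INR N <= 1).
              { apply Rmult_le_reg_r with (INR N); [lra|].
                unfold Rdiv; rewrite Rmult_assoc, Rinv_l; lra. }
              apply cap_mono; try (apply lev_closed; lra).
              intros x Hx; unfold level_set in *; lra. }
            set (ps := capval C (level_set Xb Gt s)) in *.
            set (pj := capval C (level_set Xb Gt (INR j / INR N))) in *.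
            assert (Hpj : pj * (2 * (INR j + 1)) < INR N).
            { apply Rmult_lt_compat_r with (r := 2 * (INR j + 1)) in HC; [|lra].
              unfold Rdiv in HC; rewrite Rmult_assoc, Rinv_l in HC; lra. }
            assert (ps * s * (2 * INR N) < INR N); [|nra].
            assert (ps * s * (2 * INR N) <= pj * (2 * (INR j + 1))); [|lra].
            nra. }
    destruct HmC as [[t [Ht Et]] _].
    assert (capval C (level_set Xb Gt t) * t < 1/2); [|lra].
    apply (Hall N); [lia|]. split; [lra|].
    unfold Rdiv; rewrite Rinv_r; lra.
Qed.

Lemma lev_closed_M t : 0 <= t <= 1 -> closed (M Xb) (level_set Xb Gt t).
Proof. apply lev_closed. Qed.

Lemma inner_le t : 0 < t <= 1/2 -> mu_bullet (M Xb) (capval gim) (level_set Xb Gt t) = 1/2.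
Proof.
  intros Ht. apply mb_eq.
  assert (Hv : forall s, 0 < s <= 1 -> capval gim (level_set (M Xb) (level_set Xb Gt t) s)
                = if Rle_dec s (1/2) then 1 else 0).
  { intros s Hs. unfold gim; rewrite cap2_val; unfold c2val.
    destruct dec as [_|Hn]; [|exfalso; apply Hn, level_closed; [apply lev_closed_M|]; lra].
    change (level_set (M Xb) (level_set Xb Gt t) s C1) with (capval C1 (level_set Xb Gt t) >= s).
    change (level_set (M Xb) (level_set Xb Gt t) s C2) with (capval C2 (level_set Xb Gt t) >= s).
    unfold pat. rewrite C1_le, C2_val by lra.
    destruct Rle_dec; repeat destruct dec; try lra; exfalso; tauto. }
  split.
  - exists (1/2); split; [lra|]. rewrite Hv by lra. destruct Rle_dec; lra.
  - intros s Hs. rewrite Hv by lra. destruct Rle_dec; lra.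
Qed.

Lemma inner_gt t : 1/2 < t <= 1 -> mu_bullet (M Xb) (capval gim) (level_set Xb Gt t) = 0.
Proof.
  intros Ht. apply mb_eq.
  assert (Hv : forall s, 0 < s <= 1 -> capval gim (level_set (M Xb) (level_set Xb Gt t) s) = 0).
  { intros s Hs. unfold gim; rewrite cap2_val; unfold c2val.
    destruct dec as [_|Hn]; [|exfalso; apply Hn, level_closed; [apply lev_closed_M|]; lra].
    change (level_set (M Xb) (level_set Xb Gt t) s C1) with (capval C1 (level_set Xb Gt t) >= s).
    change (level_set (M Xb) (level_set Xb Gt t) s C2) with (capval C2 (level_set Xb Gt t) >= s).
    unfold pat. rewrite C1_gt, C2_val by lra.
    repeat destruct dec; try lra; exfalso; tauto. }
  split.
  - exists 1; split; [lra|]. rewrite Hv by lra. lra.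
  - intros s Hs. rewrite Hv by lra. lra.
Qed.

Lemma LHS : mu_bullet Xb (mu_bullet (M Xb) (capval gim)) Gt = 1/4.
Proof.
  apply mb_eq. split.
  - exists (1/2); split; [lra|]. rewrite inner_le by lra. lra.
  - intros t Ht. destruct (Rle_lt_dec t (1/2)).
    + rewrite inner_le by lra. lra.
    + rewrite inner_gt by lra. lra.
Qed.

Lemma RHS : mu_bullet Xb (M_mu_bullet Xb gim) Gt = 1/2.
Proof.
  apply mb_eq. unfold M_mu_bullet. split.
  - exists (1/2); split; [lra|].
    unfold gim; rewrite cap2_val; unfold c2val.
    destruct dec as [_|Hn]; [|exfalso; apply Hn, pre_closed].
    unfold pat. destruct dec as [_|Hn]; [lra|].
    exfalso; apply Hn; split; apply pre_iff; try lra; [apply muv_C1|apply muv_C2].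
  - intros t Ht. destruct (Rle_lt_dec t (1/2)).
    + pose proof (cap_bounds gim (mu_bullet_preimage Xb (level_set Xb Gt t))). nra.
    + unfold gim; rewrite cap2_val; unfold c2val.
      assert (~ mu_bullet_preimage Xb (level_set Xb Gt t) C1).
      { rewrite pre_iff; [lra|apply muv_C1]. }
      destruct dec; [|lra]. unfold pat; repeat destruct dec; try lra; exfalso; tauto.
Qed.

Theorem proposition1 :
  exists X : space, compactum X /\
    exists gimel : M (M (M X)),
      exists F : X -> Prop, closed X F /\
        mu_bullet X (mu_bullet (M X) (capval gimel)) F
        <> mu_bullet X (M_mu_bullet X gimel) F.
Proof.
  exists Xb. split; [apply Xb_compactum|].
  exists gim, Gt. split; [apply Xb_closed|].
  rewrite LHS, RHS. lra.
Qed.
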